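(* Let $\beta_1\in(0,1)$, $\beta_0=1-\beta_1$, $\rho\in(0,1)$, $\theta\in(0,1)$, $\lambda\ge 0$ and $N_0>0$. For $s\in[0,1]$ define $$\bar m_2(s)=\frac{\beta_0\rho}{\rho+\beta_1 s(1-\rho)},\qquad \bar m_4(s)=\frac{\beta_1\rho}{\rho+\beta_1 s(1-\rho)},$$ and $$E(s)=\frac{\theta N_0\, s}{1-\theta \bar m_4(s)}+\lambda\big(\bar m_2(s)+\bar m_4(s)\big).$$ If $$N_0\le \frac{\lambda(1-\rho)(1-\beta_1\theta)^2}{\rho\,\theta^2},$$ then $E$ is convex on $[0,1]$.
   Context: Mean-field model of a dense wireless network with two channel states (BAD with probability $\beta_0$, GOOD with probability $\beta_1$, i.i.d. over slots), packet arrival probability $\rho$ per slot, buffer size one, SINR decoding threshold $\theta<1$, noise power $N_0$, and weight $\lambda$ on queue length. The population is described by the fractions $m_1,m_2,m_3,m_4$ of users in states (BAD, empty queue), (BAD, one packet), (GOOD, empty queue), (GOOD, one packet). Only users in state (GOOD, one packet) may be scheduled; $s\in[0,1]$ is the fraction of them that transmit. For a constant control $s$, the equilibrium fractions of the fluid dynamics are $\bar m_1(s)=\frac{\beta_0\beta_1(1-\rho)s}{\rho+\beta_1 s(1-\rho)}$, $\bar m_2(s)$, $\bar m_3(s)=\frac{\beta_1^2(1-\rho)s}{\rho+\beta_1 s(1-\rho)}$, $\bar m_4(s)$ as given, and $E(s)$ is the resulting equilibrium (average) cost: power $\theta N_0 s/(1-\theta\bar m_4(s))$ plus $\lambda$ times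 the fraction of users with a packet. *)

(* Defs.v *)
From Stdlib Require Import Reals.
Open Scope R_scope.

Definition m2bar (beta1 rho s : R) : R :=
  ((1 - beta1) * rho) / (rho + beta1 * s * (1 - rho)).

Definition m4bar (beta1 rho s : R) : R :=
  (beta1 * rho) / (rho + beta1 * s * (1 - rho)).

Definition Ecost (beta1 rho theta lambda N0 s : R) : R :=
  theta * N0 * s / (1 - theta * m4bar beta1 rho s)
  + lambda * (m2bar beta1 rho s + m4bar beta1 rho s).

Definition convex_on (f : R -> R) (a b : R) : Prop :=
  forall x y t, a <= x <= b -> a <= y <= b -> 0 <= t <= 1 ->
    f (t * x + (1 - t) * y) <= t * f x + (1 - t) * f y.

(* Main.v *)
Require Import Defs.
From Stdlib Require Import Reals Lra Psatz.
Open Scope R_scope.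

Lemma inv_gap (t Lx Ly : R) : 0 < Lx -> 0 < Ly -> 0 < t * Lx + (1 - t) * Ly ->
  t / Lx + (1 - t) / Ly - 1 / (t * Lx + (1 - t) * Ly) =
  t * (1 - t) * (Lx - Ly) ^ 2 / (Lx * Ly * (t * Lx + (1 - t) * Ly)).
Proof. intros; field; lra. Qed.

Theorem proposition3 (beta1 rho theta lambda N0 : R) :
  0 < beta1 < 1 -> 0 < rho < 1 -> 0 < theta < 1 -> 0 <= lambda -> 0 < N0 ->
  N0 <= lambda * (1 - rho) * (1 - beta1 * theta) ^ 2 / (rho * theta ^ 2) ->
  convex_on (Ecost beta1 rho theta lambda N0) 0 1.
Proof.
  intros Hb Hr Ht Hl HN HN0.
  set (b := beta1 * (1 - rho)).
  set (c := theta * beta1 * rho).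
  set (K := theta * N0 * c * (rho - c) / b).
  set (P := lambda * rho).
  set (q := 1 - beta1 * theta).
  assert (Hbp : 0 < b) by (unfold b; nra).
  assert (Hq : 0 < q) by (unfold q; nra).
  assert (Hc : 0 < c) by (unfold c; apply Rmult_lt_0_compat; nra).
  assert (Hca : c <= (1 - q) * rho) by (unfold c, q; nra).
  assert (Hform : forall s, 0 <= s ->
    Ecost beta1 rho theta lambda N0 s =
    theta * N0 * s + theta * N0 * c / b - K / (rho + b * s - c) + P / (rho + b * s)).
  { intros s Hs.
    assert (HD : 0 < rho + b * s) by nra.
    assert (Hu : 0 < rho + b * s - c) by nra.
    unfold Ecost, m2bar, m4bar.
    assert (E1 : 1 - theta * (beta1 * rho / (rho + beta1 * s * (1 - rho)))
                 = (rho + b * s - c) / (rho + b * s)).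
    { unfold b, c. field. unfold b in HD. lra. }
    rewrite E1. unfold K, P, b, c. unfold b in HD, Hu, Hbp. unfold c in Hu.
    field. repeat split; lra. }
  assert (HK : K <= P * q ^ 3).
  { unfold K, P, c, b.
    assert (Hrw : theta * N0 * (theta * beta1 * rho) * (rho - theta * beta1 * rho) /
       (beta1 * (1 - rho)) = N0 * (theta^2 * rho^2 * q / (1 - rho))).
    { unfold q. field. lra. }
    rewrite Hrw.
    assert (Hpos : 0 < theta^2 * rho^2 * q / (1 - rho)).
    { unfold Rdiv. apply Rmult_lt_0_compat; [|apply Rinv_0_lt_compat; lra].
      apply Rmult_lt_0_compat; [|exact Hq]. apply Rmult_lt_0_compat; apply pow_lt; lra. }
    eapply Rle_trans.
    { apply Rmult_le_compat_r; [left; exact Hpos | exact HN0]. } right. unfold q. field. split; lra. }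
  intros x y t Hx Hy Htt.
  rewrite !Hform; try nra.
  set (Dx := rho + b * x). set (Dy := rho + b * y).
  set (ux := rho + b * x - c). set (uy := rho + b * y - c).
  assert (HDx : 0 < Dx) by (unfold Dx; nra).
  assert (HDy : 0 < Dy) by (unfold Dy; nra).
  assert (H1q : 0 < 1 - q) by (unfold q; nra).
  assert (Hux : q * Dx <= ux).
  { assert (0 <= (1 - q) * (b * x)) by (apply Rmult_le_pos; [lra| apply Rmult_le_pos; lra]).
    unfold ux; fold Dx. replace (q * Dx) with (Dx - (1 - q) * rho - (1 - q) * (b * x)) by (unfold Dx; ring).
    lra. }
  assert (Huy : q * Dy <= uy).
  { assert (0 <= (1 - q) * (b * y)) by (apply Rmult_le_pos; [lra| apply Rmult_le_pos; lra]).
    unfold uy; fold Dy. replace (q * Dy) with (Dy - (1 - q) * rho - (1 - q) * (b * y)) by (unfold Dy; ring).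
    lra. }
  assert (Hux0 : 0 < ux) by nra.
  assert (Huy0 : 0 < uy) by nra.
  assert (EDz : rho + b * (t * x + (1 - t) * y) = t * Dx + (1 - t) * Dy)
    by (unfold Dx, Dy; ring).
  assert (Euz : rho + b * (t * x + (1 - t) * y) - c = t * ux + (1 - t) * uy)
    by (unfold ux, uy; ring).
  rewrite Euz, EDz.
  set (Dz := t * Dx + (1 - t) * Dy). set (uz := t * ux + (1 - t) * uy).
  assert (HDz : 0 < Dz).
  { unfold Dz. destruct (Rle_lt_dec t 0).
    - assert (t = 0) by lra. subst t. lra.
    - assert (0 < t * Dx) by (apply Rmult_lt_0_compat; lra).
      assert (0 <= (1 - t) * Dy) by (apply Rmult_le_pos; lra). lra. }
  assert (Huz : q * Dz <= uz).
  { unfold uz, Dz.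
    assert (t * (q * Dx) <= t * ux) by (apply Rmult_le_compat_l; lra).
    assert ((1 - t) * (q * Dy) <= (1 - t) * uy) by (apply Rmult_le_compat_l; lra).
    replace (q * (t * Dx + (1 - t) * Dy)) with (t * (q * Dx) + (1 - t) * (q * Dy)) by ring.
    lra. }
  assert (Huz0 : 0 < uz) by nra.
  pose proof (inv_gap t Dx Dy HDx HDy HDz) as G1.
  pose proof (inv_gap t ux uy Hux0 Huy0 Huz0) as G2.
  fold Dz in G1. fold uz in G2.
  assert (Edx : Dx - Dy = b * (x - y)) by (unfold Dx, Dy; ring).
  assert (Eux : ux - uy = b * (x - y)) by (unfold ux, uy; ring).
  rewrite Edx in G1. rewrite Eux in G2.
  set (w := t * (1 - t) * (b * (x - y)) ^ 2) in *.
  assert (Hw : 0 <= w) by (unfold w; apply Rmult_le_pos; [nra| apply pow2_ge_0]).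
  assert (key : K / (ux * uy * uz) <= P / (Dx * Dy * Dz)).
  { assert (HP : 0 <= P) by (unfold P; nra).
    assert (HDD : 0 < Dx * Dy * Dz) by (repeat apply Rmult_lt_0_compat; lra).
    assert (Huu : 0 < ux * uy * uz) by (repeat apply Rmult_lt_0_compat; lra).
    assert (Hprod : q^3 * (Dx * Dy * Dz) <= ux * uy * uz).
    { assert (0 <= q * Dx) by (apply Rmult_le_pos; lra). assert (0 <= q * Dy) by (apply Rmult_le_pos; lra). assert (0 <= q*Dz) by (apply Rmult_le_pos; lra).
      replace (q^3 * (Dx * Dy * Dz)) with ((q*Dx)*(q*Dy)*(q*Dz)) by ring.
      apply Rmult_le_compat; try lra.
      - apply Rmult_le_pos; lra.
      - apply Rmult_le_compat; lra. }
    apply Rle_trans with (P * q^3 / (ux * uy * uz)).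
    { unfold Rdiv. apply Rmult_le_compat_r; [left; apply Rinv_0_lt_compat; lra| lra]. }
    apply (Rmult_le_reg_r (ux * uy * uz * (Dx * Dy * Dz))); [nra|].
    field_simplify; try lra.
    replace (P * q ^ 3 * Dx * Dy * Dz) with (P * (q^3 * (Dx*Dy*Dz))) by ring.
    replace (P * ux * uy * uz) with (P * (ux*uy*uz)) by ring.
    apply Rmult_le_compat_l; lra. }
  assert (A1 : t * (P / Dx) + (1 - t) * (P / Dy) - P / Dz = P * (w / (Dx * Dy * Dz))).
  { rewrite <- G1. field. lra. }
  assert (A2 : t * (K / ux) + (1 - t) * (K / uy) - K / uz = K * (w / (ux * uy * uz))).
  { rewrite <- G2. field. lra. }
  assert (P * (w / (Dx * Dy * Dz)) - K * (w / (ux * uy * uz)) >= 0).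
  { replace (P * (w / (Dx * Dy * Dz)) - K * (w / (ux * uy * uz)))
      with (w * (P / (Dx * Dy * Dz) - K / (ux * uy * uz))) by (field; repeat split; lra).
    apply Rle_ge, Rmult_le_pos; lra. }
  change (Dx - c) with ux; change (Dy - c) with uy.
  match goal with |- ?L <= ?R => assert (R - L = (t * (P / Dx) + (1 - t) * (P / Dy) - P / Dz) - (t * (K / ux) + (1 - t) * (K / uy) - K / uz)) by ring end.
  lra.
Qed.
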